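(* A finitely branching directed graph is locally finite if and only if it contains no quasicycles.
   Context: For a directed graph $G$ and vertices $s,t$, $G(s,t)$ denotes the set of directed paths from $s$ to $t$; $G$ is locally finite if $G(s,t)$ is finite for all vertices $s,t$. $G$ is finitely branching if for every vertex $s$ the set $\{t : G \text{ contains an edge } s\to t\}$ is finite. A quasicycle in $G$ is a pair $(T,t)$ where $T$ is an infinite chain $t_0\to t_1\to t_2\to\cdots$ in $G$, $t$ is a vertex of $G$, and $G$ contains a path $t_i\to t$ for every $i\in\mathbb{N}$. *)

(* Defs.v *)
From Stdlib Require Import List.
Import ListNotations.
Set Implicit Arguments.

Inductive dpath {V : Type} (E : V -> V -> Prop) : V -> V -> list V -> Prop :=
| dpath_nil (s : V) : dpath E s s [s]
| dpath_cons (s u t : V) (p : list V) :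
    E s u -> dpath E u t p -> dpath E s t (s :: p).

Definition locally_finite {V : Type} (E : V -> V -> Prop) : Prop :=
  forall s t : V, exists l : list (list V), forall p, dpath E s t p -> In p l.

Definition finitely_branching {V : Type} (E : V -> V -> Prop) : Prop :=
  forall s : V, exists l : list V, forall t, E s t -> In t l.

Definition quasicycle {V : Type} (E : V -> V -> Prop) (T : nat -> V) (t : V) : Prop :=
  (forall i, E (T i) (T (S i))) /\
  (forall i, exists p, dpath E (T i) t p).

(* Main.v *)
Require Import Defs.
From Stdlib Require Import List.
From Stdlib Require Import Classical ClassicalEpsilon Lia.
Import ListNotations.

Lemma dpath_len {V} (E : V -> V -> Prop) s t p : dpath E s t p -> length p >= 1.
Proof. destruct 1; simpl; lia. Qed.

Lemma maxlen_in {V} (l : list (list V)) p :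
  In p l -> length p <= fold_right (fun q m => max (length q) m) 0 l.
Proof. induction l; simpl; [tauto|]. intros [<-|H]; [lia|]. specialize (IHl H); lia. Qed.

Lemma qc_long {V} (E : V -> V -> Prop) T t :
  quasicycle E T t -> forall i k, exists q, dpath E (T k) t q /\ length q > i.
Proof.
  intros [HE HP] i. induction i; intros k.
  - destruct (HP k) as [p Hp]. exists p. split; auto. apply dpath_len in Hp; lia.
  - destruct (IHi (S k)) as [q [Hq Hl]]. exists (T k :: q). split.
    + econstructor; eauto.
    + simpl; lia.
Qed.

Section Bad.
Variables (V : Type) (E : V -> V -> Prop) (t : V).
Definition Fin (u : V) := exists l : list (list V), forall p, dpath E u t p -> In p l.

Lemma combine_fin u (lw : list V) :
  (forall w, In w lw -> E u w -> Fin w) ->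
  exists L, forall w, In w lw -> E u w -> forall p, dpath E w t p -> In p L.
Proof.
  induction lw as [|a lw IH]; intros H.
  - exists []. simpl; tauto.
  - destruct IH as [L HL]. { intros w Hw. apply H; simpl; auto. }
    destruct (classic (E u a)) as [Ha|Ha].
    + destruct (H a (or_introl eq_refl) Ha) as [la Hla].
      exists (la ++ L). intros w [<-|Hw] Hu p Hp; apply in_or_app; eauto.
    + exists L. intros w [<-|Hw] Hu p Hp; [tauto|eauto].
Qed.

Lemma bad_step u : finitely_branching E -> ~ Fin u -> exists w, E u w /\ ~ Fin w.
Proof.
  intros FB Hu. apply NNPP; intro Hn. apply Hu. unfold Fin.
  destruct (FB u) as [lw Hlw].
  destruct (combine_fin u lw) as [L HL].
  { intros w _ Huw. apply NNPP; intro Hw. apply Hn; eauto. }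
  exists ([u] :: map (cons u) L). intros p Hp. inversion Hp; subst.
  - left; reflexivity.
  - right. apply in_map. eapply HL; eauto.
Qed.
End Bad.

Theorem lemma3p14 (V : Type) (E : V -> V -> Prop) :
  finitely_branching E ->
  (locally_finite E <-> ~ (exists (T : nat -> V) (t : V), quasicycle E T t)).
Proof.
  intros FB. split.
  - intros LF [T [t Hq]].
    destruct (LF (T 0) t) as [l Hl].
    destruct (qc_long E T t Hq (fold_right (fun q m => max (length q) m) 0 l) 0) as [q [Hq1 Hq2]].
    apply Hl, maxlen_in in Hq1. lia.
  - intros Hno s t. apply NNPP; intro Hs.
    pose (B := {u : V | ~ Fin V E t u}).
    assert (step : forall x : B, {w : B | E (proj1_sig x) (proj1_sig w)}).
    { intros [u Hu]. destruct (constructive_indefinite_description _ (bad_step V E t u FB Hu)) as [w [H1 H2]].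
      exists (exist _ w H2). exact H1. }
    pose (f := fix f (n : nat) : B := match n with 0 => exist _ s Hs | S n => proj1_sig (step (f n)) end).
    apply Hno. exists (fun n => proj1_sig (f n)), t. split.
    + intros i. simpl. exact (proj2_sig (step (f i))).
    + intros i. destruct (f i) as [u Hu]. simpl. apply NNPP; intro Hn. apply Hu. unfold Fin.
      exists []. intros p Hp. apply Hn; eauto.
Qed.
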